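(* There is a deterministic algorithm ($1$-Cover) which, given $n \ge 81$ elements, makes at most $3 n^{3/2}$ comparisons and outputs a $1$-max-set of size at most $\sqrt{n}$.
   Context: Model of imprecise comparisons: there are $n$ elements, each with a fixed unknown real value; we identify an element with its value. Asked to compare $x_i$ and $x_j$, the comparator answers either ''$x_i \ge x_j$'' or ''$x_j \ge x_i$''. If $|x_i-x_j|>1$ the answer is correct; if $|x_i-x_j|\le 1$ the answer is arbitrary (possibly adversarial and adaptive). Let $x^*$ be the maximum value of an input element. A $k$-max-set is a subset of the input elements containing at least one element of value at least $x^*-k$. Bounds on comparisons are worst case over inputs and comparator behaviours, and the guarantee must hold for all of them. *)

(* Defs.v *)
From HB Require Import structures.
From mathcomp Require Import all_boot all_order all_algebra.
From mathcomp Require Import reals.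
Set Implicit Arguments. Unset Strict Implicit. Unset Printing Implicit Defensive.
Import Order.TTheory GRing.Theory Num.Theory.
Local Open Scope ring_scope.

(* A deterministic comparison algorithm on n elements (indexed by 'I_n) is a
   finite decision tree: either it stops and outputs a subset of the elements,
   or it compares x_i and x_j and continues in the first subtree if the answer
   is "x_i >= x_j" and in the second if the answer is "x_j >= x_i". *)
Inductive dtree (n : nat) : Type :=
  | Leaf of {set 'I_n}
  | Query of 'I_n & 'I_n & dtree n & dtree n.

(* run x T c S : with values x, some (possibly adversarial, adaptive) behaviour
   of the imprecise comparator leads T to output S after exactly c comparisons. *)
Inductive run (R : realType) (n : nat) (x : 'I_n -> R)
  : dtree n -> nat -> {set 'I_n} -> Prop :=
  | run_leaf (S : {set 'I_n}) : run x (Leaf S) 0 S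
  | run_ge (i j : 'I_n) (tl tr : dtree n) (c : nat) (S : {set 'I_n}) :
      ~ (1 < `|x i - x j| /\ x i < x j) ->
      run x tl c S -> run x (Query i j tl tr) c.+1 S
  | run_le (i j : 'I_n) (tl tr : dtree n) (c : nat) (S : {set 'I_n}) :
      ~ (1 < `|x i - x j| /\ x j < x i) ->
      run x tr c S -> run x (Query i j tl tr) c.+1 S.

Definition is_kmaxset (R : realType) (n : nat) (x : 'I_n -> R) (k : R)
  (S : {set 'I_n}) : Prop :=
  exists2 i, i \in S & forall j : 'I_n, x j - k <= x i.

(* Main.v *)
Require Import Defs.
From HB Require Import structures.
From mathcomp Require Import all_boot all_order all_algebra.
From mathcomp Require Import reals.
From mathcomp Require Import zify lra.
From Stdlib Require PeanoNat.
Import Order.TTheory GRing.Theory Num.Theory.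

Fixpoint Bf (q fuel m : nat) : nat :=
  match fuel with
  | 0 => 0
  | f.+1 => if m is 0 then 0 else (Bf q f (m - (minn q m) %/ 2 - 1)).+1
  end.
Definition B q m := Bf q m m.

Lemma Bf_fuel q f1 f2 m : m <= f1 -> m <= f2 -> Bf q f1 m = Bf q f2 m.
Proof.
elim: f1 f2 m => [|f1 IH] [|f2] [|m] //= h1 h2; try lia.
congr S; apply: IH; lia.
Qed.

Lemma B_eq q m : 0 < m -> B q m = (B q (m - (minn q m) %/ 2 - 1)).+1.
Proof.
rewrite /B; case: m => [|m] //= _; congr S; apply: Bf_fuel; lia.
Qed.

Lemma B0 q : B q 0 = 0. Proof. by []. Qed.

Lemma Bf_mono q f m1 m2 : m1 <= m2 -> m2 <= f -> Bf q f m1 <= Bf q f m2.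
Proof.
elim: f m1 m2 => [|f IH] [|m1] [|m2] //= h1 h2; try lia.
rewrite ltnS; apply: IH; lia.
Qed.

Lemma B_mono q m1 m2 : m1 <= m2 -> B q m1 <= B q m2.
Proof.
move=> h; rewrite /B (@Bf_fuel q m1 m2 m1) //; exact: Bf_mono.
Qed.

Lemma B_tail q m : m < q -> 2 ^ (B q m) <= m.+1.
Proof.
elim: m {-2}m (leqnn m) => [|N IH] m hm hq.
  by have -> : m = 0 by lia.
case: m hm hq => [|m] hm hq; first by [].
rewrite B_eq //; set m' := (_ - _ - _).
have hm' : m' <= N by rewrite /m'; lia.
have := IH m' hm' ltac:(rewrite /m'; lia).
rewrite expnS /m'; lia.
Qed.

Lemma B_lin q m : 0 < q -> (q %/ 2).+1 * B q m <= m + (q %/ 2).+1 * B q q.-1.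
Proof.
move=> q0; elim: m {-2}m (leqnn m) => [|N IH] m hm.
  have -> : m = 0 by lia. rewrite B0; lia.
case: (ltnP m q) => hmq.
  have := @B_mono q m q.-1 ltac:(lia); nia.
rewrite B_eq; last lia.
have -> : minn q m = q by lia.
have := IH (m - q %/ 2 - 1) ltac:(lia); lia.
Qed.

Lemma pow_big L : 10 <= L -> 9 * L + 8 < 2 ^ L.
Proof.
elim: L => [|L IH] //; case: (ltnP L 10) => hL.
  move=> h; have -> : L = 9 by lia. by [].
move=> _; have := IH hL; rewrite expnS; lia.
Qed.

Definition qof s := 2 * ((3 * s + 2) %/ 2).

Definition small_ok : bool :=
  all (fun s => all (fun m => B (qof s) m <= s) (iota (s * s) (2 * s + 1))) (iota 9 21).

Lemma small_okT : small_ok. Proof. by vm_compute. Qed.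

Lemma B_bound s m : 9 <= s -> s * s <= m <= s * s + 2 * s -> B (qof s) m <= s.
Proof.
move=> hs hm.
case: (ltnP s 30) => hs30.
  have := small_okT; rewrite /small_ok => /allP /(_ s).
  rewrite mem_iota => /(_ ltac:(lia)) /allP /(_ m).
  by rewrite mem_iota => /(_ ltac:(lia)).
set q := qof s.
have hq : 0 < q by rewrite /q /qof; lia.
have hlin := B_lin q m hq.
have htail := @B_tail q q.-1 ltac:(lia); rewrite (prednK hq) in htail.
have hL : 3 * B q q.-1 + 3 <= s.
  case: (ltnP (3 * B q q.-1 + 3) s.+1) => // hc.
  have := @pow_big (B q q.-1) ltac:(lia).
  have hq2 : q <= 3 * s + 2 by rewrite /q /qof; lia.
  lia.
have hr : 3 * s + 3 <= 2 * (q %/ 2).+1 by rewrite /q /qof; lia.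
case: (ltnP s (B q m)) => // hc.
exfalso. move: hlin hL hr hc hm; set r := (q %/ 2).+1; set b := B q q.-1; set bm := B q m.
move=> hlin hL hr hc hm.
have h1 : r * s.+1 <= r * bm by rewrite leq_mul2l hc orbT.
have h2 : 3 * (s.+1 - b) >= 2 * s + 6 by lia.
have h3 : r * (s.+1 - b) <= s * s + 2 * s.
  rewrite mulnBr; lia.
have h4 : 6 * (r * (s.+1 - b)) >= (3 * s + 3) * (2 * s + 6).
  have -> : 6 * (r * (s.+1 - b)) = (2 * r) * (3 * (s.+1 - b)) by nia.
  by apply: leq_mul.
nia.
Qed.
Set Implicit Arguments. Unset Strict Implicit. Unset Printing Implicit Defensive.
Local Open Scope ring_scope.
Definition pairs_of n (Q : {set 'I_n}) : seq ('I_n * 'I_n) :=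
  enum [set p : 'I_n * 'I_n | [&& p.1 \in Q, p.2 \in Q & (val p.1 < val p.2)%N]].

Fixpoint rr n (ps : seq ('I_n * 'I_n)) (acc : {set 'I_n * 'I_n})
  (k : {set 'I_n * 'I_n} -> dtree n) : dtree n :=
  match ps with
  | [::] => k acc
  | p :: ps' => Query p.1 p.2 (rr ps' (p |: acc) k) (rr ps' acc k)
  end.

Definition cons_l (R : realType) n (x : 'I_n -> R) (i j : 'I_n) : Prop :=
  ~ (1 < `|x i - x j| /\ x i < x j).

Lemma run_leaf_inv (R : realType) n (x : 'I_n -> R) S c T :
  run x (Leaf S) c T -> c = 0%N /\ T = S.
Proof. by move=> h; inversion h. Qed.

Lemma run_query_inv (R : realType) n (x : 'I_n -> R) i j l r c T :
  run x (Query i j l r) c T ->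
  exists c', c = c'.+1 /\
   ((cons_l x i j /\ run x l c' T) \/ (cons_l x j i /\ run x r c' T)).
Proof.
move=> h; inversion h; subst; exists c0; split=> //.
  by left.
right; split=> //; rewrite /cons_l distrC; exact: H5.
Qed.

Lemma rr_run (R : realType) n (x : 'I_n -> R) ps acc k c T :
  run x (rr ps acc k) c T ->
  exists res c', [/\ c = (size ps + c')%N, run x (k res) c' T,
    acc \subset res /\
    (forall p, p \in res -> (p \in acc) || (p \in ps)),
    (forall p, p \in ps -> p \in res -> p \notin acc -> cons_l x p.1 p.2) &
    (forall p, p \in ps -> p \notin res -> cons_l x p.2 p.1)].
Proof.
elim: ps acc c => [|p ps IH] acc c /=.
  move=> h; exists acc, c; split=> //.
  by split=> // p ->.
move=> /run_query_inv [c' [-> [[hc hr]|[hc hr]]]].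
  have [res [c'' [-> hk [hsub hres] hl hr']]] := IH _ _ hr.
  exists res, c''; split=> //.
  - split; first by apply: subset_trans hsub; apply: subsetUr.
    move=> p' /hres; rewrite !inE; by case: (p' == p); case: (p' \in acc); case: (p' \in ps).
  - move=> p'; rewrite inE => /orP [/eqP -> //|hp' hres' hacc].
    case: (eqVneq p' p) => [-> //|hne].
    by apply: hl => //; rewrite !inE negb_or hne hacc.
  - move=> p'; rewrite inE => /orP [/eqP ->|hp' hres']; last exact: hr'.
    by move: hsub => /subsetP /(_ p); rewrite !inE eqxx => /(_ isT) ->.
have [res [c'' [-> hk [hsub hres] hl hr']]] := IH _ _ hr.
exists res, c''; split=> //.
- split=> // p' /hres; rewrite !inE; by case: (p' == p); case: (p' \in acc); case: (p' \in ps).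
- move=> p'; rewrite inE => /orP [/eqP ->|hp' hres' hacc]; last exact: hl.
  move=> hres' hacc.
  have := hres _ hres'; rewrite (negbTE hacc) /= => hin.
  exact: hl.
- move=> p'; rewrite inE => /orP [/eqP -> //|hp' hres']; last exact: hr'.
Qed.
Local Close Scope ring_scope.
Definition XX n (Q : {set 'I_n}) (r : 'I_n -> 'I_n -> bool) : nat :=
  \sum_(u in Q) \sum_(v in Q) (r u v : nat).

Lemma card_sel n (Q : {set 'I_n}) (P : pred 'I_n) :
  #|[set z in Q | P z]| = \sum_(z in Q) (P z : nat).
Proof.
rewrite -sum1_card [RHS]big_mkcond [LHS]big_mkcond /=; apply: eq_bigr => z _.
by rewrite !inE; case: (z \in Q); case: (P z).
Qed.

Lemma card_pairs n (Q : {set 'I_n}) (r : 'I_n -> 'I_n -> bool) :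
  #|[set p : 'I_n * 'I_n | [&& p.1 \in Q, p.2 \in Q & r p.1 p.2]]| = XX Q r.
Proof.
rewrite /XX.
rewrite (pair_big (fun u => u \in Q) (fun v => v \in Q) (fun u v => (r u v : nat))).
rewrite -sum1_card.
rewrite big_mkcond.
rewrite [RHS]big_mkcond.
apply: eq_bigr => p _. rewrite !inE.
case: (p.1 \in Q) => //=; case: (p.2 \in Q) => //=; case: (r p.1 p.2).
Qed.
Lemma XX_sym n (Q : {set 'I_n}) (r : 'I_n -> 'I_n -> bool) :
  (forall u v, u \in Q -> v \in Q -> r u v + r v u = (u != v))%N ->
  (2 * XX Q r = #|Q| * #|Q|.-1)%N.
Proof.
move=> hr.
have e1 : XX Q (fun u v => r v u) = XX Q r.
  rewrite /XX. exact: (exchange_big _ _ _ _ _ (fun u v => (r v u : nat))).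
have e2 : (XX Q r + XX Q (fun u v => r v u) = \sum_(u in Q) \sum_(v in Q) (u != v : nat))%N.
  rewrite /XX -big_split /=; apply: eq_bigr => u hu.
  rewrite -big_split /=; apply: eq_bigr => v hv; exact: hr.
rewrite mul2n -addnn -{2}e1 e2.
have e3 : forall u, u \in Q -> \sum_(v in Q) (u != v : nat) = #|Q|.-1.
  move=> u hu; rewrite -card_sel.
  rewrite (cardsD1 u Q) hu add1n /=; apply: eq_card => v; rewrite !inE.
  by rewrite eq_sym andbC.
rewrite (eq_bigr (fun _ => #|Q|.-1) e3).
by rewrite sum_nat_const mulnC.
Qed.

Definition beats n (res : {set 'I_n * 'I_n}) (u v : 'I_n) : bool :=
  if (val u < val v)%N then (u, v) \in res
  else if (val v < val u)%N then (v, u) \notin res else false.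

Definition wins n (Q : {set 'I_n}) res (u : 'I_n) := #|[set z in Q | beats res u z]|.

Fixpoint loop n (q fuel : nat) (C S : {set 'I_n}) : dtree n :=
  match fuel with
  | 0 => Leaf (S :|: C)
  | f.+1 =>
    let Q := [set z in take q (enum C)] in
    match [pick z in Q] with
    | None => Leaf (S :|: C)
    | Some z0 => rr (pairs_of Q) set0 (fun res =>
        let w := [arg max_(i > z0 in Q) wins Q res i] in
        loop q f (C :\: (w |: [set z in Q | beats res w z])) (w |: S))
    end
  end.

Lemma beats_sym n res (u v : 'I_n) : (beats res u v + beats res v u = (u != v))%N.
Proof.
rewrite /beats; case: (ltngtP (val u) (val v)) => h.
- have -> : u != v by apply/eqP => e; move: h; rewrite e ltnn.
  set b := (_ \in res); by case: b.
- have -> : u != v by apply/eqP => e; move: h; rewrite e ltnn.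
  set b := (_ \in res); by case: b.
- have e : u = v by apply: val_inj. by rewrite e eqxx.
Qed.

Lemma ltv_sym n (u v : 'I_n) : ((val u < val v)%N + (val v < val u)%N = (u != v))%N.
Proof.
case: (ltngtP (val u) (val v)) => h /=.
- by have -> : u != v by apply/eqP => e; move: h; rewrite e ltnn.
- by have -> : u != v by apply/eqP => e; move: h; rewrite e ltnn.
- have e : u = v by apply: val_inj. by rewrite e eqxx.
Qed.

Lemma cardQ n q (C : {set 'I_n}) :
  #|[set z in take q (enum C)]| = minn q #|C|.
Proof.
rewrite cardsE (card_uniqP _) ?take_uniq ?enum_uniq //.
by rewrite size_take_min cardE.
Qed.

Lemma subQ n q (C : {set 'I_n}) z : z \in [set z in take q (enum C)] -> z \in C.
Proof. by rewrite inE => /mem_take; rewrite mem_enum. Qed.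

Local Open Scope ring_scope.

Definition topin (R : realType) n (x : 'I_n -> R) (C : {set 'I_n}) :=
  exists2 i, i \in C & forall j, x j <= x i.

Lemma good_union (R : realType) n (x : 'I_n -> R) C S :
  topin x C \/ is_kmaxset x 1 S -> is_kmaxset x 1 (S :|: C).
Proof.
case=> [[i hi hm]|[i hi hm]]; exists i; rewrite ?inE ?hi ?orbT //.
move=> j; have := hm j; lra.
Qed.

Lemma beats_cons (R : realType) n (x : 'I_n -> R) (Q : {set 'I_n}) (res : {set 'I_n * 'I_n}) (u v : 'I_n) :
  (forall p, p \in pairs_of Q -> p \in res -> p \notin (set0 : {set 'I_n * 'I_n}) ->
     cons_l x p.1 p.2) ->
  (forall p, p \in pairs_of Q -> p \notin res -> cons_l x p.2 p.1) ->
  u \in Q -> v \in Q -> beats res u v -> cons_l x u v.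
Proof.
move=> hl hr hu hv; rewrite /beats.
case: ifP => h1.
  move=> hres; apply: (hl (u, v)) => //; last by rewrite inE.
  by rewrite mem_enum inE /= hu hv h1.
case: ifP => h2 // hres.
apply: (hr (v, u)) => //.
by rewrite mem_enum inE /= hu hv h2.
Qed.

Lemma cons_close (R : realType) (a b : R) :
  b <= a -> ~ (1 < `|b - a| /\ b < a) -> a - 1 <= b.
Proof.
move=> hba hc; case: (lerP (a - 1) b) => // hlt; exfalso; apply: hc; split; last lra.
rewrite distrC ger0_norm; lra.
Qed.

Lemma loop_inv (R : realType) n (x : 'I_n -> R) h fuel C S c T :
  (2 <= h)%N ->
  run x (loop (2 * h) fuel C S) c T ->
  (#|C| <= fuel)%N ->
  topin x C \/ is_kmaxset x 1 S ->
  [/\ (c <= (2 * h - 2) * #|C|)%N, (#|T| <= #|S| + B (2 * h) #|C|)%N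
    & is_kmaxset x 1 T].
Proof.
move=> h2; elim: fuel C S c => [|f IH] C S c /=.
  move=> /run_leaf_inv [-> ->] hC hinv.
  have C0 : C = set0 by apply/eqP; rewrite -cards_eq0 -leqn0.
  split; [by [] | by rewrite C0 setU0 cards0 B0 addn0 | exact: good_union].
set Q := [set z in take (2 * h) (enum C)].
have hQk : #|Q| = minn (2 * h) #|C| by rewrite cardQ.
have hQC : forall z, z \in Q -> z \in C by move=> z; apply: subQ.
case: pickP => [z0 hz0 | hnone]; last first.
  move=> /run_leaf_inv [-> ->] hC hinv.
  have hQ0 : #|Q| = 0%N.
    apply/eqP; rewrite cards_eq0; apply/eqP/setP => z; rewrite in_set0; exact: hnone.
  have C0 : C = set0 by apply: cards0_eq; lia.
  split; [by [] | by rewrite C0 setU0 cards0 B0 addn0 | exact: good_union].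
move=> /rr_run [res [c' [-> hk [_ _] hl hr]]] hC hinv.
move: hk => /= hk.
set w := [arg max_(i > z0 in Q) wins Q res i] in hk.
have [hwQ hwmax] : w \in Q /\ forall j, j \in Q -> (wins Q res j <= wins Q res w)%N.
  rewrite /w; case: (arg_maxnP (wins Q res) hz0) => i hi hmax; split=> // j hj; exact: hmax.
set L := [set z in Q | beats res w z] in hk.
set C' := C :\: (w |: L) in hk.
have hwL : w \notin L by rewrite inE /beats ltnn andbF.
have hsub : w |: L \subset C.
  apply/subsetP => z /setU1P [-> | ]; first exact: hQC hwQ.
  rewrite /L in_set => /andP [hz _]; exact: hQC hz.
have hcardC' : #|C'| = (#|C| - #|L|.+1)%N.
  by rewrite /C' cardsD (setIidPr hsub) cardsU1 hwL.
have hLC : (#|L|.+1 <= #|C|)%N.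
  by have := subset_leq_card hsub; rewrite cardsU1 hwL.
have hk0 : (0 < #|Q|)%N by apply/card_gt0P; exists z0.
have hL : (#|Q|.-1 <= 2 * #|L|)%N.
  have e1 := @XX_sym n Q (beats res) (fun u v _ _ => beats_sym res u v).
  have e2 : (XX Q (beats res) <= #|Q| * #|L|)%N.
    rewrite /XX -sum_nat_const; apply: leq_sum => u hu.
    rewrite -card_sel; exact: hwmax.
  have : (#|Q| * #|Q|.-1 <= #|Q| * (2 * #|L|))%N.
    by rewrite -e1 mulnCA leq_mul2l e2 orbT.
  by rewrite leq_pmul2l.
have hsize : (2 * size (pairs_of Q) = #|Q| * #|Q|.-1)%N.
  rewrite /pairs_of -cardE (card_pairs Q (fun u v => (val u < val v)%N)).
  exact: (@XX_sym n Q (fun u v => (val u < val v)%N) (fun u v _ _ => ltv_sym u v)).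
have hinv' : topin x C' \/ is_kmaxset x 1 (w |: S).
  case: hinv => [[i hi hm]|[i hi hm]]; last first.
    by right; exists i; rewrite // inE hi orbT.
  case hiC': (i \in C'); first by left; exists i.
  move: hiC'; rewrite /C' inE hi andbT => /negbFE /setU1P [ei|hiL].
    right; exists w; first exact: setU11.
    by move=> j; have := hm j; rewrite -ei; lra.
  move: hiL; rewrite inE => /andP [hiQ hb].
  have hc := beats_cons hl hr hwQ hiQ hb.
  have := cons_close (hm w) hc => hwi.
  right; exists w; first exact: setU11.
  by move=> j; have := hm j; lra.
have hC' : (#|C'| <= f)%N. { rewrite hcardC' leq_subLR; apply: (leq_trans hC); by rewrite addSn ltnS leq_addl. }
have [ih1 ih2 ih3] := IH C' (w |: S) c' hk hC' hinv'.
split=> //.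
- have key : (size (pairs_of Q) <= (2 * h - 2) * #|L|.+1)%N.
    have hkq : (#|Q| <= 2 * h)%N by lia.
    case: (ltnP #|Q| (2 * h)) => hq.
      nia.
    have hLh : (h <= #|L|)%N by lia.
    nia.
  rewrite hcardC' in ih1.
  have -> : ((2 * h - 2) * #|C| = (2 * h - 2) * #|L|.+1 + (2 * h - 2) * (#|C| - #|L|.+1))%N.
    by rewrite -mulnDr subnKC.
  exact: leq_add.
- apply: (leq_trans ih2).
  rewrite (@B_eq (2 * h) #|C|); last lia.
  have : (B (2 * h) #|C'| <= B (2 * h) (#|C| - minn (2 * h) #|C| %/ 2 - 1))%N.
    by apply: B_mono; lia.
  move=> hB; rewrite cardsU1; case: (w \notin S) => /=.
  - move: hB; set u := B _ #|C'|; set v := B _ _; lia.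
  - move: hB; set u := B _ #|C'|; set v := B _ _; lia.
Qed.

Lemma nat_le_sqrt (R : realType) (s n : nat) : (s * s <= n)%N -> (s%:R : R) <= Num.sqrt (n%:R).
Proof.
move=> h.
have -> : (s%:R : R) = Num.sqrt ((s%:R : R) ^+ 2) by rewrite sqrtr_sqr ger0_norm.
apply: ler_wsqrtr; by rewrite -natrX ler_nat expnS expn1.
Qed.

Theorem mainTheorem5 :
  exists alg : forall n : nat, dtree n,
    forall (n : nat), (81 <= n)%N ->
    forall (R : realType) (x : 'I_n -> R) (c : nat) (S : {set 'I_n}),
      run x (alg n) c S ->
      [/\ (c%:R : R) <= 3 * n%:R * Num.sqrt (n%:R : R),
          (#|S|%:R : R) <= Num.sqrt (n%:R : R)
        & is_kmaxset x 1 S].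
Proof.
exists (fun n => loop (qof (PeanoNat.Nat.sqrt n)) n [set: 'I_n] set0).
move=> n hn R x c S hrun.
set s := PeanoNat.Nat.sqrt n in hrun.
have [hs1 hs2] : (s * s <= n)%N /\ (n < s.+1 * s.+1)%N.
  have [a b] := PeanoNat.Nat.sqrt_spec n (PeanoNat.Nat.le_0_l n).
  by split; rewrite /s; nia.
have hs9 : (9 <= s)%N.
  case: (leqP 9 s) => // hlt; exfalso.
  nia.
set h := ((3 * s + 2) %/ 2)%N.
have h2 : (2 <= h)%N by rewrite /h; lia.
have hrun' : run x (loop (2 * h) n [set: 'I_n] set0) c S by [].
have hn0 : (0 < n)%N by lia.
have htop : topin x [set: 'I_n].
  pose i0 : 'I_n := Ordinal hn0.
  case: (@arg_maxP _ _ _ i0 predT x isT) => i _ hi.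
  by exists i; rewrite ?inE // => j; apply: hi.
have [c1 c2 c3] := loop_inv h2 hrun' (ltac:(by rewrite cardsT card_ord) : (#|[set: 'I_n]| <= n)%N) (or_introl htop).
have hsq := nat_le_sqrt R hs1.
rewrite cardsT card_ord in c1 c2.
split=> //.
- have hc : (c <= 3 * s * n)%N by rewrite /h in c1; nia.
  apply: (le_trans (_ : c%:R <= (3 * s * n)%N%:R)); first by rewrite ler_nat.
  rewrite natrM natrM mulrAC.
  apply: ler_wpM2l; first by rewrite mulr_ge0.
  exact: hsq.
- rewrite cards0 add0n in c2.
  have hb : (B (2 * h) n <= s)%N.
    have -> : (2 * h = qof s)%N by [].
    apply: B_bound => //; apply/andP; split=> //; nia.
  apply: (le_trans _ hsq); rewrite ler_nat; exact: leq_trans c2 hb.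
Qed.
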